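(* For every integer $N\ge5$, \[ h(N)>\left\lfloor\frac{\lfloor\sqrt{N}\rfloor+1}{2}\right\rfloor. \]
   Context: A finite set $A\subseteq\mathbb{Z}$ is Sidon if $a+b=c+d$ with $a,b,c,d\in A$ implies $\{a,b\}=\{c,d\}$ as unordered pairs. For a natural number $N$, $h(N)=\max\{|A| : A\subseteq\{1,\dots,N\},\ A\text{ Sidon}\}$. *)

(* Defs.v *)
From mathcomp Require Import all_boot.
From Stdlib Require PeanoNat.
Set Implicit Arguments. Unset Strict Implicit. Unset Printing Implicit Defensive.

(* Subsets of {1,...,N} are represented as sets A : {set 'I_N.+1} with 0 \notin A. *)

Definition sidonb (N : nat) (A : {set 'I_N.+1}) : bool :=
  [forall a in A, forall b in A, forall c in A, forall d in A,
     ((a : nat) + b == (c : nat) + d) ==>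
     (((a == c) && (b == d)) || ((a == d) && (b == c)))].

Definition h (N : nat) : nat :=
  \max_(A : {set 'I_N.+1} | (ord0 \notin A) && sidonb A) #|A|.

(* Main.v *)
Require Import Defs.
From mathcomp Require Import all_boot.
From Stdlib Require PeanoNat.
From mathcomp Require Import all_algebra all_field all_solvable zify ring.
Set Implicit Arguments. Unset Strict Implicit. Unset Printing Implicit Defensive.
Import GRing.Theory UnityRootTheory.

Lemma sum_lt n W : \sum_(c < n) (c < W : nat) = minn W n.
Proof.
elim: n => [|n IH]; first by rewrite big_ord0 minn0.
rewrite big_ord_recr /= IH.
case: (ltnP n W) => H; rewrite ?addn1 ?addn0; lia.
Qed.

Lemma count_window n W (S : {set 'I_n.+1}) : W <= n.+1 ->
  \sum_(c : 'I_n.+1) #|[set i in S | (val (i + c)%R < W)]| = #|S| * W.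
Proof.
move=> HW.
transitivity (\sum_(c : 'I_n.+1) \sum_(i in S) (val (i + c)%R < W : nat)).
  apply: eq_bigr => c _.
  rewrite -sum1_card big_mkcond [RHS]big_mkcond /=.
  by apply: eq_bigr => i _; rewrite inE; case: (i \in S); case: (_ < W).
rewrite exchange_big /= -sum1_card big_distrl /=.
apply: eq_bigr => i _; rewrite mul1n.
have E : forall j : 'I_n.+1, (i + (j - i))%R = j by move=> j; rewrite addrC subrK.
rewrite (reindex_inj (addIr (- i)%R)).
rewrite (eq_bigr (fun c : 'I_n.+1 => (val c < W : nat))); last first.
  by move=> j _; have /= := congr1 val (E j); move=> ->.
rewrite (sum_lt n.+1 W); lia.
Qed.

Definition msidon n (S : {set 'I_n.+1}) := forall a b c d : 'I_n.+1,
  a \in S -> b \in S -> c \in S -> d \in S ->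
  a + b = c + d %[mod n.+1] -> (a = c /\ b = d) \/ (a = d /\ b = c).

Lemma window n N s W (S : {set 'I_n.+1}) : msidon S -> W <= n.+1 -> W <= N ->
  s * n.+1 < #|S| * W ->
  exists A : {set 'I_N.+1}, (ord0 \notin A) && sidonb A /\ s < #|A|.
Proof.
move=> HS HWn HWN Hlt.
have [c Hc] : exists c : 'I_n.+1, s < #|[set i in S | val (i + c)%R < W]|.
  case: (boolP [exists c : 'I_n.+1, s < #|[set i in S | val (i + c)%R < W]|]).
    by move=> /existsP [c Hc]; exists c.
  rewrite negb_exists => /forallP H; exfalso.
  have : \sum_(c : 'I_n.+1) #|[set i in S | val (i + c)%R < W]| <= \sum_(c : 'I_n.+1) s.
    by apply: leq_sum => c _; rewrite leqNgt H.
  rewrite count_window // sum_nat_const card_ord; lia.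
set T := [set i in S | _] in Hc.
pose f (i : 'I_n.+1) : 'I_N.+1 := inord (val (i + c)%R).+1.
have fv : forall i, i \in T -> val (f i) = (val (i + c)%R).+1.
  move=> i; rewrite inE => /andP [_ Hi]; rewrite /f /= inordK //; move: Hi => /= ; lia.
exists (f @: T); split; last first.
  rewrite card_in_imset //.
  move=> i j Hi Hj /(congr1 val); rewrite !fv // => -[] E; apply: (addIr c); exact: val_inj.
apply/andP; split.
  apply/imsetP => -[i Hi] /(congr1 val); rewrite fv //.
apply/forall_inP => a /imsetP [ia Ha ->].
apply/forall_inP => b /imsetP [ib Hb ->].
apply/forall_inP => a' /imsetP [ic Hc' ->].
apply/forall_inP => b' /imsetP [id Hd ->].
apply/implyP; rewrite !fv // => /eqP E.
have E2 : ia + ib = ic + id %[mod n.+1].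
  have E1 : val (ia + c)%R + val (ib + c)%R = val (ic + c)%R + val (id + c)%R by lia.
  move: E1 => /= /(congr1 (modn^~ n.+1)); rewrite !modnDm => /eqP.
  have -> : ia + c + (ib + c) = (ia + ib) + (c + c) by lia.
  have -> : ic + c + (id + c) = (ic + id) + (c + c) by lia.
  by rewrite eqn_modDr => /eqP.
have := HS ia ib ic id.
move: Ha Hb Hc' Hd; rewrite !inE => /andP[Ha _] /andP[Hb _] /andP[Hc' _] /andP[Hd _].
by case/(_ Ha Hb Hc' Hd E2) => -[-> ->]; rewrite !eqxx ?orbT.
Qed.

Section F.
Local Open Scope ring_scope.
Variable L : finFieldType.
Variable n : nat.
Hypothesis cardL : #|L| = n.+2.

Lemma exists_gen : exists g : L, n.+1.-primitive_root g.
Proof.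
have : has n.+1.-primitive_root (enum (predC1 (0%R : L))).
  apply: has_prim_root => //.
  - apply/allP => x; rewrite mem_enum /= => Hx.
    rewrite unity_rootE; apply/eqP; apply: (mulfI Hx).
    by rewrite -exprS -cardL expf_card mulr1.
  - exact: enum_uniq.
  - by rewrite -cardE cardC1 cardL.
by case/hasP => g _ Hg; exists g.
Qed.

Variable g : L.
Hypothesis Hg : n.+1.-primitive_root g.

Lemma gpow_inj (i j : 'I_n.+1) : g ^+ i = g ^+ j -> i = j.
Proof.
move/eqP; rewrite (eq_prim_root_expr Hg) !modn_small // => /eqP H.
exact: val_inj.
Qed.

Lemma g_neq0 : g != 0.
Proof.
apply/negP => /eqP g0; have := prim_expr_order Hg; rewrite g0 expr0n /=.
by move/eqP; rewrite eq_sym oner_eq0.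
Qed.

Lemma glog (x : L) : x != 0 -> exists i : 'I_n.+1, g ^+ i = x.
Proof.
move=> Hx.
have Hc : #|[set g ^+ i | i : 'I_n.+1]| = #|predC1 (0%R : L)|.
  rewrite card_imset ?card_ord ?cardC1 ?cardL //.
  by move=> i j; apply: gpow_inj.
have Hsub : [set g ^+ i | i : 'I_n.+1] \subset predC1 (0%R : L).
  apply/subsetP => y /imsetP [i _ ->]; rewrite !inE expf_neq0 //; exact: g_neq0.
have := (subset_cardP Hc Hsub) x; rewrite !inE Hx => /imsetP [i _ ->].
by exists i.
Qed.
End F.

Section G.
Local Open Scope ring_scope.
Variable L : finFieldType.
Hypothesis pch : 2%N \in [pchar L].
Variable q : nat.
Hypothesis Hq : [pchar L].-nat q.
Hypothesis q2 : (2 <= q)%N.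
Variable n : nat.
Hypothesis Hn : n.+2 = (q * q)%N.
Hypothesis cardL2 : #|L| = n.+2.
Variable g : L.
Hypothesis Hg : n.+1.-primitive_root g.

Definition K (x : L) := x ^+ q == x.

Lemma KD x y : K x -> K y -> K (x + y).
Proof. by rewrite /K exprDn_pchar // => /eqP -> /eqP ->. Qed.
Lemma KN x : K x -> K (- x).
Proof. by rewrite oppr_pchar2. Qed.
Lemma KM x y : K x -> K y -> K (x * y).
Proof. by rewrite /K exprMn => /eqP -> /eqP ->. Qed.
Lemma KV x : K x -> K (x^-1).
Proof. by rewrite /K exprVn => /eqP ->. Qed.
Lemma gK : ~ K g.
Proof.
rewrite /K -{2}(expr1 g) (eq_prim_root_expr Hg) !modn_small; [|nia|nia].
by move/eqP => H; move: q2; rewrite H.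
Qed.

Definition Sg : {set 'I_n.+1} := [set i : 'I_n.+1 | K (g ^+ i - g)].

Lemma Sg_sidon : msidon Sg.
Proof.
move=> a b c d; rewrite !inE => Ka Kb Kc Kd Habcd.
set ta := g ^+ a - g in Ka *; set tb := g ^+ b - g in Kb *.
set tc := g ^+ c - g in Kc *; set td := g ^+ d - g in Kd *.
have ga : g ^+ a = g + ta by rewrite /ta addrC subrK.
have gb : g ^+ b = g + tb by rewrite /tb addrC subrK.
have gc : g ^+ c = g + tc by rewrite /tc addrC subrK.
have gd : g ^+ d = g + td by rewrite /td addrC subrK.
have E : (g + ta) * (g + tb) = (g + tc) * (g + td).
  rewrite -ga -gb -gc -gd -!exprD; apply/eqP; rewrite (eq_prim_root_expr Hg).
  exact/eqP.
have Hal : g * (ta + tb - tc - td) = tc * td - ta * tb.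
  apply/eqP; rewrite -subr_eq0; apply/eqP.
  transitivity ((g + ta) * (g + tb) - (g + tc) * (g + td)); first ring.
  by rewrite E subrr.
have A0 : ta + tb - tc - td = 0.
  apply/eqP/negPn/negP => Hnz; apply: gK.
  have -> : g = (tc * td - ta * tb) / (ta + tb - tc - td) by rewrite -Hal mulfK.
  apply: KM; first exact: KD (KM Kc Kd) (KN (KM Ka Kb)).
  exact: KV (KD (KD (KD Ka Kb) (KN Kc)) (KN Kd)).
have P1 : ta * tb = tc * td.
  apply/eqP; rewrite eq_sym -subr_eq0; apply/eqP; by rewrite -Hal A0 mulr0.
have S1 : ta + tb = tc + td.
  apply/eqP; rewrite -subr_eq0; apply/eqP; rewrite -A0; ring.
have : (tc - ta) * (tc - tb) = 0.
  transitivity (tc * tc - (ta + tb) * tc + ta * tb); first ring.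
  rewrite S1 P1; ring.
move/eqP; rewrite mulf_eq0 !subr_eq0 => /orP [/eqP Hca | /eqP Hcb].
  have Hdb : td = tb by apply: (@addrI _ tc); rewrite -S1 Hca.
  left; split; apply: (gpow_inj Hg); by rewrite ?ga ?gb ?gc ?gd ?Hca ?Hdb.
have Hda : td = ta by apply: (@addrI _ tc); rewrite -S1 Hcb addrC.
right; split; apply: (gpow_inj Hg); by rewrite ?ga ?gb ?gc ?gd ?Hcb ?Hda.
Qed.

Lemma K0 : K 0.
Proof. by rewrite /K expr0n; case: q q2 => [|[|]]. Qed.

Lemma Kpow (k : nat) : K (g ^+ ((q + 1) * k)).
Proof.
rewrite /K -exprM; apply/eqP/eqP; rewrite (eq_prim_root_expr Hg).
have -> : ((q + 1) * k * q = (q + 1) * k + n.+1 * k)%N by nia.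
by rewrite addnC mulnC modnMDl.
Qed.

Lemma Sg_card : (q <= #|Sg|)%N.
Proof.
pose T := 0 |: [set g ^+ ((q + 1) * k) | k : 'I_q.-1].
have cT : #|T| = q.
  rewrite cardsU1 card_imset ?card_ord.
    have -> : (0 \notin [set g ^+ ((q + 1) * k) | k : 'I_q.-1]) = true.
      apply/negP => /imsetP [k _ /eqP]; rewrite eq_sym expf_eq0 (negPf (g_neq0 Hg)).
      by rewrite andbF.
    by case: q q2 => [|[|]].
  move=> i j /eqP; rewrite (eq_prim_root_expr Hg) !modn_small.
  - by rewrite eqn_pmul2l ?addn1 // => /eqP /val_inj.
  - have := ltn_ord j; nia.
  - have := ltn_ord i; nia.
have sub : T \subset (fun i : 'I_n.+1 => g ^+ i - g) @: Sg.
  apply/subsetP => t Ht.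
  have Kt : K t.
    move: Ht; rewrite !inE => /orP [/eqP -> | /imsetP [k _ ->]]; [exact: K0 | exact: Kpow].
  have gt0 : g + t != 0.
    apply/negP => /eqP H; apply: gK; have -> : g = - t.
      by apply/eqP; rewrite -subr_eq0 opprK H.
    exact: KN.
  have [i Hi] := glog cardL2 Hg gt0.
  apply/imsetP; exists i; last by rewrite Hi addrC addKr.
  by rewrite inE Hi addrC addKr.
rewrite -cT; apply: (leq_trans (subset_leq_card sub)).
exact: leq_imset_card.
Qed.
End G.

Lemma field_sidon j : (0 < j)%N -> exists n, exists S : {set 'I_n.+1},
  n.+2 = (2 ^ j * 2 ^ j)%N /\ msidon S /\ (2 ^ j <= #|S|)%N.
Proof.
move=> j0.
have pr2 : prime 2 by [].
have jj : (0 < j + j)%N by rewrite addn_gt0 j0.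
have [L pch cardL] := pPrimePowerField pr2 jj.
have q2 : (2 <= 2 ^ j)%N by rewrite -{1}(expn1 2) leq_exp2l.
pose n := (2 ^ j * 2 ^ j).-2.
have Hn : n.+2 = (2 ^ j * 2 ^ j)%N by rewrite /n; nia.
have cardL2 : #|L| = n.+2 by rewrite cardL Hn expnD.
have [g Hg] := exists_gen cardL2.
have Hq : [pchar L]%R.-nat (2 ^ j).
  by rewrite pnatX (eq_pnat _ (pcharf_eq pch)) pnat_id.
exists n, (@Sg L (2 ^ j) n g); split => //; split.
  exact: (Sg_sidon pch Hq q2 Hn cardL2 Hg).
exact: (Sg_card pch Hq q2 Hn cardL2 Hg).
Qed.

Theorem mainTheorem11 (N : nat) : 5 <= N ->
  (PeanoNat.Nat.sqrt N).+1 %/ 2 < h N.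
Proof.
move=> HN.
have [H1 H2] := PeanoNat.Nat.sqrt_spec' N.
set r := PeanoNat.Nat.sqrt N in H1 H2 *.
set s := r.+1 %/ 2.
have r2 : 2 <= r by nia.
have s1 : 2 * s <= r.+1 by rewrite /s; lia.
have s2 : r <= 2 * s by rewrite /s; lia.
have s0 : 0 < s by lia.
pose j := (trunc_log 2 s).+1.
have q1 : s < 2 ^ j by apply: trunc_log_ltn.
have q3 : 2 ^ j <= 2 * s.
  by rewrite /j expnS leq_mul2l /=; apply: trunc_logP.
have [n [S [Hn [HS HcS]]]] := field_sidon (ltn0Sn (trunc_log 2 s)).
rewrite -/j in Hn HcS.
set q := 2 ^ j in q1 q3 Hn HcS.
have [|||A [HA HcA]] := window (W := s * q + 1) (N := N) (s := s) HS.
- nia.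
- have : s * q + 1 <= 2 * s * s + 1 by nia.
  move=> H; apply: (leq_trans H).
  case: (ltnP s 2) => Hs.
    have -> : s = 1 by lia.
    lia.
  nia.
- apply: (@leq_trans (q * (s * q + 1))); first nia.
  by rewrite leq_mul2r HcS orbT.
apply: (leq_trans HcA).
exact: (@leq_bigmax_cond _ (fun A : {set 'I_N.+1} => (ord0 \notin A) && sidonb A) (fun A => #|A|) A HA).
Qed.
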